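(* Let $K$ be the $2$-uniform tiling of the plane whose vertex types are $[3^1,4^1,6^1,4^1]$ and $[4^1,6^1,12^1]$. If $X$ is a map on the torus that is a quotient $X=K/\Gamma$ of $K$, then the vertices of $X$ form at most $9$ orbits under ${\rm Aut}(X)$.
   Context: A map is a polyhedral map: a cellular embedding of a connected graph in a closed surface such that the intersection of any two distinct faces is empty, a single vertex, or a single edge. For a vertex $u$, the faces containing $u$ form a cyclic sequence (the face-cycle at $u$); if this cyclic sequence consists of consecutive blocks of $n_1$ $p_1$-gons, then $n_2$ $p_2$-gons, ..., then $n_k$ $p_k$-gons, with cyclically consecutive $p_i$ distinct, then $u$ is said to have type $[p_1^{n_1},\dots,p_k^{n_k}]$ (defined up to cyclic shift and reversal). A $2$-uniform tiling is an edge-to-edge tiling of the Euclidean plane $\mathbb{R}^2$ by regular polygons whose symmetry group has exactly two orbits on the set of vertices; viewed as a map on the plane, its vertices have (at most) two types, listed as $[W;Z]$. (Up to isomorphism there are exactly $20$ such tilings; there is exactly one with the vertex types named in the claim.) For a map $K$ on the plane, a quotient of $K$ on the torus is a map $X$ on the torus together with a polyhedral covering map $\eta:K\to X$ with $X=K/\Gamma$, where $\Gamma\le {\rm Aut}(K)$ is a subgroup acting without fixed vertices, edges or faces and $K/\Gamma$ is homeomorphic to the torus. ${\rm Aut}(X)$ denotes the automorphism group of the map $X$, acting on its vertex set $V(X)$. *)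

(* Defs.v *)
From mathcomp Require Import all_boot all_order all_algebra.
Set Implicit Arguments. Unset Strict Implicit. Unset Printing Implicit Defensive.
Import GRing.Theory Num.Theory.

(* A map (cellular embedding of a connected graph in a closed surface, or in *)
(* the plane) is encoded by its set of flags F (vertex-edge-face incidences) *)
(* together with the three involutions rho0 (change the vertex), rho1       *)
(* (change the edge) and rho2 (change the face).                             *)

Record mapstr (F : Type) := MapStr {
  rho0 : F -> F; rho1 : F -> F; rho2 : F -> F }.

Inductive reach2 (F : Type) (f g : F -> F) (x : F) : F -> Prop :=
  | reach2_refl : reach2 f g x x
  | reach2_f y : reach2 f g x y -> reach2 f g x (f y)
  | reach2_g y : reach2 f g x y -> reach2 f g x (g y).

Inductive reach3 (F : Type) (f g h : F -> F) (x : F) : F -> Prop :=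
  | reach3_refl : reach3 f g h x x
  | reach3_f y : reach3 f g h x y -> reach3 f g h x (f y)
  | reach3_g y : reach3 f g h x y -> reach3 f g h x (g y)
  | reach3_h y : reach3 f g h x y -> reach3 f g h x (h y).

Section Maps.
Variables (F : Type) (M : mapstr F).

Definition same_vertex x y := reach2 (rho1 M) (rho2 M) x y.
Definition same_edge x y := reach2 (rho0 M) (rho2 M) x y.
Definition same_face x y := reach2 (rho0 M) (rho1 M) x y.

Definition is_map : Prop :=
  [/\ [/\ involutive (rho0 M), involutive (rho1 M) & involutive (rho2 M)],
      (forall x, [/\ rho0 M x <> x, rho1 M x <> x & rho2 M x <> x]),
      (forall x, rho0 M (rho2 M x) = rho2 M (rho0 M x) /\ rho0 M (rho2 M x) <> x)
    & (forall x y, reach3 (rho0 M) (rho1 M) (rho2 M) x y)].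

Definition is_aut (g : F -> F) : Prop :=
  bijective g /\
  forall x, [/\ g (rho0 M x) = rho0 M (g x), g (rho1 M x) = rho1 M (g x)
              & g (rho2 M x) = rho2 M (g x)].

Definition is_aut_subgroup (Gam : (F -> F) -> Prop) : Prop :=
  [/\ Gam id,
      (forall g h, Gam g -> Gam h -> Gam (g \o h)),
      (forall g, Gam g -> exists2 h, Gam h & cancel g h /\ cancel h g)
    & (forall g, Gam g -> is_aut g)].

Definition no_fixed_cells (Gam : (F -> F) -> Prop) : Prop :=
  forall g, Gam g -> (exists x, g x <> x) ->
  forall x, [/\ ~ same_vertex (g x) x, ~ same_edge (g x) x & ~ same_face (g x) x].

End Maps.

Definition is_quotient_map (FK FX : Type) (K : mapstr FK) (X : mapstr FX)
    (Gam : (FK -> FK) -> Prop) (eta : FK -> FX) : Prop :=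
  [/\ (forall x, [/\ eta (rho0 K x) = rho0 X (eta x),
                     eta (rho1 K x) = rho1 X (eta x)
                   & eta (rho2 K x) = rho2 X (eta x)]),
      (forall z, exists x, eta x = z)
    & (forall x y, eta x = eta y <-> exists2 g, Gam g & g x = y)].

Section FiniteMaps.
Variables (F : finType) (M : mapstr F).

Definition vrel : rel F := fun x y => (y == rho1 M x) || (y == rho2 M x).
Definition erel : rel F := fun x y => (y == rho0 M x) || (y == rho2 M x).
Definition frel : rel F := fun x y => (y == rho0 M x) || (y == rho1 M x).

Definition vclass (x : F) : {set F} := [set y | connect vrel x y].
Definition eclass (x : F) : {set F} := [set y | connect erel x y].
Definition fclass (x : F) : {set F} := [set y | connect frel x y].

Definition vertices : {set {set F}} := [set vclass x | x : F].
Definition edges : {set {set F}} := [set eclass x | x : F].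
Definition faces : {set {set F}} := [set fclass x | x : F].

Definition verts_of (A : {set F}) : {set {set F}} := [set vclass x | x in A].
Definition edges_of (A : {set F}) : {set {set F}} := [set eclass x | x in A].

Definition euler_char : int := (#|vertices|%:Z - #|edges|%:Z + #|faces|%:Z)%R.

Definition orientable : Prop :=
  exists c : F -> bool, forall x,
    [/\ c (rho0 M x) = ~~ c x, c (rho1 M x) = ~~ c x & c (rho2 M x) = ~~ c x].

Definition is_torus_map : Prop := [/\ is_map M, orientable & euler_char = 0%R].

Definition polyhedral : Prop :=
  forall x y : F, fclass x != fclass y ->
    let CV := verts_of (fclass x) :&: verts_of (fclass y) in
    let CE := edges_of (fclass x) :&: edges_of (fclass y) in
    (CE = set0 /\ #|CV| <= 1) \/
    (exists e, [/\ e \in edges, CE = [set e], CV = verts_of e & #|CV| = 2]).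

End FiniteMaps.

(* start from the rhombitrihexagonal tiling 3.4.6.4 (unit edges), hexagon    *)
(* centres forming the triangular lattice L = Z a + Z b, |a|=|b|=1+sqrt 3,   *)
(* angle(a,b) = 60 deg.  For every hexagon centred at a point of 2L, replace *)
(* the rosette (that hexagon, its 6 adjacent squares and 6 triangles) by one *)
(* regular dodecagon.  The translation group of K is 2L.  A fundamental      *)
(* domain contains 18 vertices (6 of type 3.4.6.4, 12 of type 4.6.12), 60    *)
(* edges and 120 flags.  A flag of K is (s, t, k) : it is the translate by    *)
(* s*(2a) + t*(2b) of the k-th flag of the fundamental domain.  Flags are    *)
(* numbered by vertex: local vertex j (0<=j<18) owns 2*deg(j) consecutive    *)
(* flags; local vertex types (faces in cyclic order around the vertex):      *)
(*  0:[6,12,4] 1:[6,4,3,4] 2:[12,6,4] 3:[4,6,12] 4:[4,3,4,6] 5:[4,12,6]       *)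
(*  6:[6,4,12] 7:[6,12,4] 8:[4,6,4,3] 9:[12,6,4] 10:[12,4,6] 11:[4,3,4,6]    *)
(*  12:[6,4,3,4] 13:[6,4,12] 14:[4,6,12] 15:[3,4,6,4] 16:[4,12,6]           *)
(*  17:[12,4,6].                                                            *)
(* rho1, rho2 keep the vertex (hence the translate); rho0 of flag k is the   *)
(* flag j of the translate shifted by (o1 - 1, o2 - 1), where                *)
(* (o1, o2, j) = nth _ K_r0_tab k.                                           *)

Definition K_r0_tab : seq (nat * nat * nat) := [::
  (1,1,39); (1,1,6); (1,1,111); (1,1,36); (1,1,9); (1,1,108);
  (1,1,1); (1,1,16); (1,1,103); (1,1,4); (1,1,75); (1,1,100);
  (1,1,19); (1,1,72); (1,1,25); (1,1,66); (1,1,7); (1,1,22);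
  (1,1,69); (1,1,12); (1,1,27); (1,0,90); (1,1,17); (1,1,32);
  (1,0,93); (1,1,14); (1,0,87); (1,1,20); (2,0,59); (1,0,84);
  (1,1,35); (2,0,56); (1,1,23); (1,1,38); (2,0,51); (1,1,30);
  (1,1,3); (2,0,48); (1,1,33); (1,1,0); (1,1,79); (1,1,46);
  (1,1,95); (1,1,76); (1,1,49); (1,1,98); (1,1,41); (1,1,54);
  (0,2,37); (1,1,44); (1,1,57); (0,2,34); (1,1,65); (0,1,82);
  (1,1,47); (1,1,62); (0,2,31); (1,1,50); (0,1,85); (0,2,28);
  (1,1,67); (0,1,114); (1,1,55); (1,1,70); (0,1,117); (1,1,52);
  (1,1,15); (1,1,60); (1,1,73); (1,1,18); (1,1,63); (1,1,78);
  (1,1,13); (1,1,68); (1,1,101); (1,1,10); (1,1,43); (1,1,106);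
  (1,1,71); (1,1,40); (1,1,119); (1,1,88); (2,1,53); (1,1,116);
  (1,2,29); (2,1,58); (1,1,91); (1,2,26); (1,1,81); (1,1,96);
  (1,2,21); (1,1,86); (1,1,99); (1,2,24); (1,1,107); (1,1,42);
  (1,1,89); (1,1,104); (1,1,45); (1,1,92); (1,1,11); (1,1,74);
  (1,1,109); (1,1,8); (1,1,97); (1,1,112); (1,1,77); (1,1,94);
  (1,1,5); (1,1,102); (1,1,115); (1,1,2); (1,1,105); (1,1,118);
  (2,1,61); (1,1,110); (1,1,83); (2,1,64); (1,1,113); (1,1,80)].
Definition K_r1_tab : seq nat := [::
  1 ;0 ;3 ;2 ;5 ;4 ;7 ;6 ;9 ;8 ;11 ;10 ;13 ;12 ;15 ;14 ;17 ;16 ;19 ;18;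
  21 ;20 ;23 ;22 ;25 ;24 ;27 ;26 ;29 ;28 ;31 ;30 ;33 ;32 ;35 ;34 ;37 ;36 ;39 ;38;
  41 ;40 ;43 ;42 ;45 ;44 ;47 ;46 ;49 ;48 ;51 ;50 ;53 ;52 ;55 ;54 ;57 ;56 ;59 ;58;
  61 ;60 ;63 ;62 ;65 ;64 ;67 ;66 ;69 ;68 ;71 ;70 ;73 ;72 ;75 ;74 ;77 ;76 ;79 ;78;
  81 ;80 ;83 ;82 ;85 ;84 ;87 ;86 ;89 ;88 ;91 ;90 ;93 ;92 ;95 ;94 ;97 ;96 ;99 ;98;
  101 ;100 ;103 ;102 ;105 ;104 ;107 ;106 ;109 ;108 ;111 ;110 ;113 ;112 ;115 ;114 ;117 ;116 ;119 ;118].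
Definition K_r2_tab : seq nat := [::
  3 ;4 ;5 ;0 ;1 ;2 ;9 ;12 ;11 ;6 ;13 ;8 ;7 ;10 ;17 ;18 ;19 ;14 ;15 ;16;
  23 ;24 ;25 ;20 ;21 ;22 ;29 ;32 ;31 ;26 ;33 ;28 ;27 ;30 ;37 ;38 ;39 ;34 ;35 ;36;
  43 ;44 ;45 ;40 ;41 ;42 ;49 ;50 ;51 ;46 ;47 ;48 ;55 ;58 ;57 ;52 ;59 ;54 ;53 ;56;
  63 ;64 ;65 ;60 ;61 ;62 ;69 ;70 ;71 ;66 ;67 ;68 ;75 ;78 ;77 ;72 ;79 ;74 ;73 ;76;
  83 ;86 ;85 ;80 ;87 ;82 ;81 ;84 ;91 ;92 ;93 ;88 ;89 ;90 ;97 ;98 ;99 ;94 ;95 ;96;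
  103 ;106 ;105 ;100 ;107 ;102 ;101 ;104 ;111 ;112 ;113 ;108 ;109 ;110 ;117 ;118 ;119 ;114 ;115 ;116].

Definition KF : Type := (int * int * 'I_120)%type.

Local Open Scope ring_scope.

Definition K_r0 (x : KF) : KF :=
  let: (s, t, k) := x in
  let: (o1, o2, j) := nth (1, 1, 0)%N K_r0_tab k in
  (s + (o1%:Z - 1), t + (o2%:Z - 1), inord j).

Definition K_r1 (x : KF) : KF :=
  let: (s, t, k) := x in (s, t, inord (nth 0%N K_r1_tab k)).

Definition K_r2 (x : KF) : KF :=
  let: (s, t, k) := x in (s, t, inord (nth 0%N K_r2_tab k)).

Definition K : mapstr KF := MapStr K_r0 K_r1 K_r2.

Local Close Scope ring_scope.

Definition K_tab_ok : bool :=
  [&& size K_r0_tab == 120, size K_r1_tab == 120, size K_r2_tab == 120 &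
  all (fun k =>
    let: (o1, o2, j) := nth (1, 1, 0) K_r0_tab k in
    let: (p1, p2, k') := nth (1, 1, 0) K_r0_tab j in
    let r1 := nth 0 K_r1_tab in let r2 := nth 0 K_r2_tab in
    let: (q1, q2, m) := nth (1, 1, 0) K_r0_tab (r2 k) in
    [&& j < 120, k' == k, o1 + p1 == 2, o2 + p2 == 2, j != k,
        r1 k < 120, r1 (r1 k) == k, r1 k != k,
        r2 k < 120, r2 (r2 k) == k, r2 k != k,
        r2 j == m, (o1, o2) == (q1, q2) & m != k])
    (iota 0 120)].

Lemma K_tab_okP : K_tab_ok. Proof. by vm_compute. Qed.

(* Main.v *)
Require Import Defs.
From mathcomp Require Import all_boot all_order all_algebra.
From mathcomp Require Import zify ring.
Set Implicit Arguments. Unset Strict Implicit. Unset Printing Implicit Defensive.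
Import GRing.Theory Num.Theory.
Local Open Scope ring_scope.

Definition rho (i : nat) : KF -> KF :=
  match i with 0%N => K_r0 | 1%N => K_r1 | _ => K_r2 end.
Fixpoint wapp (w : seq nat) (x : KF) : KF :=
  if w is a :: w' then wapp w' (rho a x) else x.
Definition tr (a b : int) (x : KF) : KF :=
  let: (s, t, k) := x in (s + a, t + b, k).
Definition Gmap (A : int*int*int*int) (ct : seq (int*int*nat)) (s t : int) (x : KF) : KF :=
  let: (u, v, k) := x in
  let: (a11, a12, a21, a22) := A in
  let: (c1, c2, j) := nth (0, 0, 0%N) ct k in
  (a11 * u + a12 * v + c1 + s, a21 * u + a22 * v + c2 + t, inord j).

Definition KN := (int * int * nat)%type.
Definition rhoN (i : nat) (x : KN) : KN :=
  let: (s, t, k) := x in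
  match i with
  | 0%N => let: (o1, o2, j) := nth (1, 1, 0)%N K_r0_tab k in
           (s + (o1%:Z - 1), t + (o2%:Z - 1), j)
  | 1%N => (s, t, nth 0%N K_r1_tab k)
  | _ => (s, t, nth 0%N K_r2_tab k) end.
Fixpoint wappN (w : seq nat) (x : KN) : KN :=
  if w is a :: w' then wappN w' (rhoN a x) else x.
Definition trN (a b : int) (x : KN) : KN :=
  let: (s, t, k) := x in (s + a, t + b, k).
Definition GmapN (A : int*int*int*int) (ct : seq (int*int*nat)) (s t : int) (x : KN) : KN :=
  let: (u, v, k) := x in
  let: (a11, a12, a21, a22) := A in
  let: (c1, c2, j) := nth (0, 0, 0%N) ct k in
  (a11 * u + a12 * v + c1 + s, a21 * u + a22 * v + c2 + t, j).
Definition piK (x : KF) : KN := let: (s, t, k) := x in (s, t, nat_of_ord k).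

Definition o0 : 'I_120 := ord0.
Definition x0 : KF := (0, 0, o0).
Definition Wk : seq (seq nat) := [::
  [::];
  [::1];
  [::2;1];
  [::2];
  [::1;2];
  [::1;2;1];
  [::1;0];
  [::1;0;1];
  [::1;0;2;1];
  [::1;0;2];
  [::1;0;1;2;1;2];
  [::1;0;2;1;2];
  [::1;0;1;2];
  [::1;0;1;2;1];
  [::1;0;1;0;1;2];
  [::1;0;1;0;1;2;1];
  [::1;0;1;0];
  [::1;0;1;0;1];
  [::1;0;1;0;2;1];
  [::1;0;1;0;2];
  [::0;1;0;1;0;2];
  [::0;1;0;1;0;2;1];
  [::0;1;0;1;0;1];
  [::0;1;0;1;0];
  [::0;1;0;1;0;1;2;1];
  [::0;1;0;1;0;1;2];
  [::0;1;0;1;2;1];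
  [::0;1;0;1;2];
  [::0;1;0;2;1;2];
  [::0;1;0;1;2;1;2];
  [::0;1;0;2];
  [::0;1;0;2;1];
  [::0;1;0;1];
  [::0;1;0];
  [::0;1;2;1];
  [::0;1;2];
  [::0;2];
  [::0;2;1];
  [::0;1];
  [::0];
  [::1;0;1;2;1;0;1;2;1;0];
  [::1;0;1;2;1;0;1;2;1;0;1];
  [::1;0;1;2;1;0;1;2;1;0;2;1];
  [::1;0;1;2;1;0;1;2;1;0;2];
  [::1;0;1;2;1;0;1;2;1;0;1;2];
  [::1;0;1;2;1;0;1;2;1;0;1;2;1];
  [::1;0;1;2;1;0;1;2;1;0;1;0];
  [::1;0;1;2;1;0;1;2;1;0;1;0;1];
  [::1;0;1;2;1;0;1;2;1;0;1;0;2;1];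
  [::1;0;1;2;1;0;1;2;1;0;1;0;2];
  [::1;0;1;2;1;0;1;2;1;0;1;0;1;2];
  [::1;0;1;2;1;0;1;2;1;0;1;0;1;2;1];
  [::1;0;1;0;1;2;1;0;1;0;1;2;1;0];
  [::1;0;1;0;1;2;1;0;1;0;1;2;1;0;1];
  [::1;0;1;0;1;2;1;0;1;0;2;1;0;1];
  [::1;0;1;0;1;2;1;0;1;0;2;1;0];
  [::1;0;1;0;1;2;1;0;1;0;2;1;0;1;2;1];
  [::1;0;1;0;1;2;1;0;1;0;2;1;0;1;2];
  [::1;0;1;0;1;2;1;0;1;0;1;2;1;0;1;2];
  [::1;0;1;0;1;2;1;0;1;0;1;2;1;0;1;2;1];
  [::1;0;1;0;1;2;1;0;1;0];
  [::1;0;1;0;1;2;1;0;1;0;1];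
  [::1;0;1;0;1;2;1;0;1;0;2;1];
  [::1;0;1;0;1;2;1;0;1;0;2];
  [::1;0;1;0;1;2;1;0;1;0;1;2];
  [::1;0;1;0;1;2;1;0;1;0;1;2;1];
  [::1;0;1;0;1;2;1;0];
  [::1;0;1;0;1;2;1;0;1];
  [::1;0;1;0;2;1;0;1];
  [::1;0;1;0;2;1;0];
  [::1;0;1;0;1;2;1;0;1;2];
  [::1;0;1;0;2;1;0;1;2];
  [::1;0;1;2;1;0];
  [::1;0;1;2;1;0;1];
  [::1;0;1;2;1;0;2;1];
  [::1;0;1;2;1;0;2];
  [::1;0;1;2;1;0;1;2;1;2];
  [::1;0;1;2;1;0;2;1;2];
  [::1;0;1;2;1;0;1;2];
  [::1;0;1;2;1;0;1;2;1];
  [::2;1;0;1;0;2;1;0];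
  [::2;1;0;1;0;2;1;0;1];
  [::2;1;0;1;0;1;2;1;0;1];
  [::2;1;0;1;0;1;2;1;0];
  [::2;1;0;1;0;1;2;1;0;1;2;1];
  [::2;1;0;1;0;1;2;1;0;1;2];
  [::2;1;0;1;0;2;1;0;1;2];
  [::2;1;0;1;0;2;1;0;1;2;1];
  [::2;1;0;1;0;2;1;0;1;0];
  [::1;0;2;1;0;1;2;1;0;1;0];
  [::2;1;0;1;0;2;1;0;1;0;2;1];
  [::2;1;0;1;0;2;1;0;1;0;2];
  [::1;0;2;1;0;1;2;1;0;1;0;2];
  [::1;0;2;1;0;1;2;1;0;1;0;2;1];
  [::1;0;2;1;0;1;2;1;0;2];
  [::1;0;2;1;0;1;2;1;0;2;1];
  [::1;0;2;1;0;1;2;1;0;1];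
  [::1;0;2;1;0;1;2;1;0];
  [::1;0;2;1;0;1;2;1;0;1;2;1];
  [::1;0;2;1;0;1;2;1;0;1;2];
  [::1;0;2;1;0;2];
  [::1;0;2;1;0;2;1];
  [::1;0;2;1;0;1];
  [::1;0;2;1;0];
  [::1;0;2;1;0;1;2;1];
  [::1;0;2;1;0;1;2];
  [::1;0;2;1;0;2;1;2];
  [::1;0;2;1;0;1;2;1;2];
  [::1;2;1;0];
  [::1;2;1;0;1];
  [::2;1;0;1];
  [::2;1;0];
  [::1;2;1;0;1;2];
  [::2;1;0;1;2];
  [::2;1;0;1;0;1];
  [::2;1;0;1;0];
  [::2;1;0;1;0;1;2;1];
  [::2;1;0;1;0;1;2];
  [::2;1;0;1;0;2];
  [::2;1;0;1;0;2;1]].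
Definition Wxp : seq nat := [::2;1;0;1;0;1;0;1;0;1;0;1;2;1;0;1;0;1].
Definition Wxm : seq nat := [::1;0;1;0;1;2;1;0;1;0;1;0;1;0;1;0;1;2].
Definition Wyp : seq nat := [::2;1;0;1;0;2;1;0;1;2;1;0;1;2;1;0;1;0].
Definition Wym : seq nat := [::0;1;0;1;2;1;0;1;2;1;0;1;0;2;1;0;1;2].
Definition dws : seq (seq nat) := [:: [::0;1;0;1;0;1]; [::1;2;1;2;1;2]; [::0;1;2;1;2;1;2;0]; [::0;1;0;1;0;1;0;1]; [::0;1;0;1;0;1;0;1;0;1;0;1]].
Definition A22 : int*int*int*int := ((Negz 0),(Posz 0),(Posz 0),(Negz 0)).
Definition C22 : seq (int*int*nat) := [::
  ((Posz 0),(Posz 0),22);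
  ((Posz 0),(Posz 0),23);
  ((Posz 0),(Posz 0),24);
  ((Posz 0),(Posz 0),25);
  ((Posz 0),(Posz 0),20);
  ((Posz 0),(Posz 0),21);
  ((Posz 0),(Posz 0),32);
  ((Posz 0),(Posz 0),33);
  ((Posz 0),(Posz 0),26);
  ((Posz 0),(Posz 0),27);
  ((Posz 0),(Posz 0),28);
  ((Posz 0),(Posz 0),29);
  ((Posz 0),(Posz 0),30);
  ((Posz 0),(Posz 0),31);
  ((Posz 0),(Posz 0),36);
  ((Posz 0),(Posz 0),37);
  ((Posz 0),(Posz 0),38);
  ((Posz 0),(Posz 0),39);
  ((Posz 0),(Posz 0),34);
  ((Posz 0),(Posz 0),35);
  ((Posz 0),(Posz 0),4);
  ((Posz 0),(Posz 0),5);
  ((Posz 0),(Posz 0),0);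
  ((Posz 0),(Posz 0),1);
  ((Posz 0),(Posz 0),2);
  ((Posz 0),(Posz 0),3);
  ((Posz 0),(Posz 0),8);
  ((Posz 0),(Posz 0),9);
  ((Posz 0),(Posz 0),10);
  ((Posz 0),(Posz 0),11);
  ((Posz 0),(Posz 0),12);
  ((Posz 0),(Posz 0),13);
  ((Posz 0),(Posz 0),6);
  ((Posz 0),(Posz 0),7);
  ((Posz 0),(Posz 0),18);
  ((Posz 0),(Posz 0),19);
  ((Posz 0),(Posz 0),14);
  ((Posz 0),(Posz 0),15);
  ((Posz 0),(Posz 0),16);
  ((Posz 0),(Posz 0),17);
  ((Posz 1),(Negz 0),62);
  ((Posz 1),(Negz 0),63);
  ((Posz 1),(Negz 0),64);
  ((Posz 1),(Negz 0),65);
  ((Posz 1),(Negz 0),60);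
  ((Posz 1),(Negz 0),61);
  ((Posz 1),(Negz 0),70);
  ((Posz 1),(Negz 0),71);
  ((Posz 1),(Negz 0),66);
  ((Posz 1),(Negz 0),67);
  ((Posz 1),(Negz 0),68);
  ((Posz 1),(Negz 0),69);
  ((Posz 1),(Negz 0),76);
  ((Posz 1),(Negz 0),77);
  ((Posz 1),(Negz 0),78);
  ((Posz 1),(Negz 0),79);
  ((Posz 1),(Negz 0),72);
  ((Posz 1),(Negz 0),73);
  ((Posz 1),(Negz 0),74);
  ((Posz 1),(Negz 0),75);
  ((Posz 1),(Negz 0),44);
  ((Posz 1),(Negz 0),45);
  ((Posz 1),(Negz 0),40);
  ((Posz 1),(Negz 0),41);
  ((Posz 1),(Negz 0),42);
  ((Posz 1),(Negz 0),43);
  ((Posz 1),(Negz 0),48);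
  ((Posz 1),(Negz 0),49);
  ((Posz 1),(Negz 0),50);
  ((Posz 1),(Negz 0),51);
  ((Posz 1),(Negz 0),46);
  ((Posz 1),(Negz 0),47);
  ((Posz 1),(Negz 0),56);
  ((Posz 1),(Negz 0),57);
  ((Posz 1),(Negz 0),58);
  ((Posz 1),(Negz 0),59);
  ((Posz 1),(Negz 0),52);
  ((Posz 1),(Negz 0),53);
  ((Posz 1),(Negz 0),54);
  ((Posz 1),(Negz 0),55);
  ((Posz 0),(Negz 0),104);
  ((Posz 0),(Negz 0),105);
  ((Posz 0),(Negz 0),106);
  ((Posz 0),(Negz 0),107);
  ((Posz 0),(Negz 0),100);
  ((Posz 0),(Negz 0),101);
  ((Posz 0),(Negz 0),102);
  ((Posz 0),(Negz 0),103);
  ((Posz 0),(Negz 0),112);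
  ((Posz 0),(Negz 0),113);
  ((Posz 0),(Negz 0),108);
  ((Posz 0),(Negz 0),109);
  ((Posz 0),(Negz 0),110);
  ((Posz 0),(Negz 0),111);
  ((Posz 0),(Negz 0),116);
  ((Posz 0),(Negz 0),117);
  ((Posz 0),(Negz 0),118);
  ((Posz 0),(Negz 0),119);
  ((Posz 0),(Negz 0),114);
  ((Posz 0),(Negz 0),115);
  ((Posz 0),(Negz 0),84);
  ((Posz 0),(Negz 0),85);
  ((Posz 0),(Negz 0),86);
  ((Posz 0),(Negz 0),87);
  ((Posz 0),(Negz 0),80);
  ((Posz 0),(Negz 0),81);
  ((Posz 0),(Negz 0),82);
  ((Posz 0),(Negz 0),83);
  ((Posz 0),(Negz 0),90);
  ((Posz 0),(Negz 0),91);
  ((Posz 0),(Negz 0),92);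
  ((Posz 0),(Negz 0),93);
  ((Posz 0),(Negz 0),88);
  ((Posz 0),(Negz 0),89);
  ((Posz 0),(Negz 0),98);
  ((Posz 0),(Negz 0),99);
  ((Posz 0),(Negz 0),94);
  ((Posz 0),(Negz 0),95);
  ((Posz 0),(Negz 0),96);
  ((Posz 0),(Negz 0),97)].
Definition A46 : int*int*int*int := ((Posz 0),(Negz 0),(Posz 1),(Posz 1)).
Definition C46 : seq (int*int*nat) := [::
  ((Posz 0),(Posz 0),46);
  ((Posz 0),(Posz 0),47);
  ((Posz 0),(Posz 0),48);
  ((Posz 0),(Posz 0),49);
  ((Posz 0),(Posz 0),50);
  ((Posz 0),(Posz 0),51);
  ((Posz 0),(Posz 0),54);
  ((Posz 0),(Posz 0),55);
  ((Posz 0),(Posz 0),56);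
  ((Posz 0),(Posz 0),57);
  ((Posz 0),(Posz 0),58);
  ((Posz 0),(Posz 0),59);
  ((Posz 0),(Posz 0),52);
  ((Posz 0),(Posz 0),53);
  ((Posz 0),(Posz 0),60);
  ((Posz 0),(Posz 0),61);
  ((Posz 0),(Posz 0),62);
  ((Posz 0),(Posz 0),63);
  ((Posz 0),(Posz 0),64);
  ((Posz 0),(Posz 0),65);
  ((Posz 0),(Posz 0),68);
  ((Posz 0),(Posz 0),69);
  ((Posz 0),(Posz 0),70);
  ((Posz 0),(Posz 0),71);
  ((Posz 0),(Posz 0),66);
  ((Posz 0),(Posz 0),67);
  ((Posz 0),(Posz 0),72);
  ((Posz 0),(Posz 0),73);
  ((Posz 0),(Posz 0),74);
  ((Posz 0),(Posz 0),75);
  ((Posz 0),(Posz 0),76);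
  ((Posz 0),(Posz 0),77);
  ((Posz 0),(Posz 0),78);
  ((Posz 0),(Posz 0),79);
  ((Posz 0),(Posz 0),42);
  ((Posz 0),(Posz 0),43);
  ((Posz 0),(Posz 0),44);
  ((Posz 0),(Posz 0),45);
  ((Posz 0),(Posz 0),40);
  ((Posz 0),(Posz 0),41);
  ((Negz 0),(Posz 0),88);
  ((Negz 0),(Posz 0),89);
  ((Negz 0),(Posz 0),90);
  ((Negz 0),(Posz 0),91);
  ((Negz 0),(Posz 0),92);
  ((Negz 0),(Posz 0),93);
  ((Negz 0),(Posz 0),96);
  ((Negz 0),(Posz 0),97);
  ((Negz 0),(Posz 0),98);
  ((Negz 0),(Posz 0),99);
  ((Negz 0),(Posz 0),94);
  ((Negz 0),(Posz 0),95);
  ((Negz 0),(Posz 0),102);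
  ((Negz 0),(Posz 0),103);
  ((Negz 0),(Posz 0),104);
  ((Negz 0),(Posz 0),105);
  ((Negz 0),(Posz 0),106);
  ((Negz 0),(Posz 0),107);
  ((Negz 0),(Posz 0),100);
  ((Negz 0),(Posz 0),101);
  ((Negz 0),(Posz 0),110);
  ((Negz 0),(Posz 0),111);
  ((Negz 0),(Posz 0),112);
  ((Negz 0),(Posz 0),113);
  ((Negz 0),(Posz 0),108);
  ((Negz 0),(Posz 0),109);
  ((Negz 0),(Posz 0),114);
  ((Negz 0),(Posz 0),115);
  ((Negz 0),(Posz 0),116);
  ((Negz 0),(Posz 0),117);
  ((Negz 0),(Posz 0),118);
  ((Negz 0),(Posz 0),119);
  ((Negz 0),(Posz 0),82);
  ((Negz 0),(Posz 0),83);
  ((Negz 0),(Posz 0),84);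
  ((Negz 0),(Posz 0),85);
  ((Negz 0),(Posz 0),86);
  ((Negz 0),(Posz 0),87);
  ((Negz 0),(Posz 0),80);
  ((Negz 0),(Posz 0),81);
  ((Negz 0),(Posz 1),6);
  ((Negz 0),(Posz 1),7);
  ((Negz 0),(Posz 1),8);
  ((Negz 0),(Posz 1),9);
  ((Negz 0),(Posz 1),10);
  ((Negz 0),(Posz 1),11);
  ((Negz 0),(Posz 1),12);
  ((Negz 0),(Posz 1),13);
  ((Negz 0),(Posz 1),16);
  ((Negz 0),(Posz 1),17);
  ((Negz 0),(Posz 1),18);
  ((Negz 0),(Posz 1),19);
  ((Negz 0),(Posz 1),14);
  ((Negz 0),(Posz 1),15);
  ((Negz 0),(Posz 1),20);
  ((Negz 0),(Posz 1),21);
  ((Negz 0),(Posz 1),22);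
  ((Negz 0),(Posz 1),23);
  ((Negz 0),(Posz 1),24);
  ((Negz 0),(Posz 1),25);
  ((Negz 0),(Posz 1),28);
  ((Negz 0),(Posz 1),29);
  ((Negz 0),(Posz 1),30);
  ((Negz 0),(Posz 1),31);
  ((Negz 0),(Posz 1),32);
  ((Negz 0),(Posz 1),33);
  ((Negz 0),(Posz 1),26);
  ((Negz 0),(Posz 1),27);
  ((Negz 0),(Posz 1),34);
  ((Negz 0),(Posz 1),35);
  ((Negz 0),(Posz 1),36);
  ((Negz 0),(Posz 1),37);
  ((Negz 0),(Posz 1),38);
  ((Negz 0),(Posz 1),39);
  ((Negz 0),(Posz 1),2);
  ((Negz 0),(Posz 1),3);
  ((Negz 0),(Posz 1),4);
  ((Negz 0),(Posz 1),5);
  ((Negz 0),(Posz 1),0);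
  ((Negz 0),(Posz 1),1)].
Definition A70 : int*int*int*int := ((Posz 0),(Posz 1),(Negz 0),(Negz 0)).
Definition C70 : seq (int*int*nat) := [::
  ((Posz 0),(Posz 0),70);
  ((Posz 0),(Posz 0),71);
  ((Posz 0),(Posz 0),66);
  ((Posz 0),(Posz 0),67);
  ((Posz 0),(Posz 0),68);
  ((Posz 0),(Posz 0),69);
  ((Posz 0),(Posz 0),78);
  ((Posz 0),(Posz 0),79);
  ((Posz 0),(Posz 0),72);
  ((Posz 0),(Posz 0),73);
  ((Posz 0),(Posz 0),74);
  ((Posz 0),(Posz 0),75);
  ((Posz 0),(Posz 0),76);
  ((Posz 0),(Posz 0),77);
  ((Posz 0),(Posz 0),44);
  ((Posz 0),(Posz 0),45);
  ((Posz 0),(Posz 0),40);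
  ((Posz 0),(Posz 0),41);
  ((Posz 0),(Posz 0),42);
  ((Posz 0),(Posz 0),43);
  ((Posz 0),(Posz 0),50);
  ((Posz 0),(Posz 0),51);
  ((Posz 0),(Posz 0),46);
  ((Posz 0),(Posz 0),47);
  ((Posz 0),(Posz 0),48);
  ((Posz 0),(Posz 0),49);
  ((Posz 0),(Posz 0),56);
  ((Posz 0),(Posz 0),57);
  ((Posz 0),(Posz 0),58);
  ((Posz 0),(Posz 0),59);
  ((Posz 0),(Posz 0),52);
  ((Posz 0),(Posz 0),53);
  ((Posz 0),(Posz 0),54);
  ((Posz 0),(Posz 0),55);
  ((Posz 0),(Posz 0),64);
  ((Posz 0),(Posz 0),65);
  ((Posz 0),(Posz 0),60);
  ((Posz 0),(Posz 0),61);
  ((Posz 0),(Posz 0),62);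
  ((Posz 0),(Posz 0),63);
  ((Posz 0),(Posz 0),112);
  ((Posz 0),(Posz 0),113);
  ((Posz 0),(Posz 0),108);
  ((Posz 0),(Posz 0),109);
  ((Posz 0),(Posz 0),110);
  ((Posz 0),(Posz 0),111);
  ((Posz 0),(Posz 0),118);
  ((Posz 0),(Posz 0),119);
  ((Posz 0),(Posz 0),114);
  ((Posz 0),(Posz 0),115);
  ((Posz 0),(Posz 0),116);
  ((Posz 0),(Posz 0),117);
  ((Posz 0),(Posz 0),86);
  ((Posz 0),(Posz 0),87);
  ((Posz 0),(Posz 0),80);
  ((Posz 0),(Posz 0),81);
  ((Posz 0),(Posz 0),82);
  ((Posz 0),(Posz 0),83);
  ((Posz 0),(Posz 0),84);
  ((Posz 0),(Posz 0),85);
  ((Posz 0),(Posz 0),92);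
  ((Posz 0),(Posz 0),93);
  ((Posz 0),(Posz 0),88);
  ((Posz 0),(Posz 0),89);
  ((Posz 0),(Posz 0),90);
  ((Posz 0),(Posz 0),91);
  ((Posz 0),(Posz 0),98);
  ((Posz 0),(Posz 0),99);
  ((Posz 0),(Posz 0),94);
  ((Posz 0),(Posz 0),95);
  ((Posz 0),(Posz 0),96);
  ((Posz 0),(Posz 0),97);
  ((Posz 0),(Posz 0),106);
  ((Posz 0),(Posz 0),107);
  ((Posz 0),(Posz 0),100);
  ((Posz 0),(Posz 0),101);
  ((Posz 0),(Posz 0),102);
  ((Posz 0),(Posz 0),103);
  ((Posz 0),(Posz 0),104);
  ((Posz 0),(Posz 0),105);
  ((Posz 0),(Posz 0),32);
  ((Posz 0),(Posz 0),33);
  ((Posz 0),(Posz 0),26);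
  ((Posz 0),(Posz 0),27);
  ((Posz 0),(Posz 0),28);
  ((Posz 0),(Posz 0),29);
  ((Posz 0),(Posz 0),30);
  ((Posz 0),(Posz 0),31);
  ((Posz 0),(Posz 0),38);
  ((Posz 0),(Posz 0),39);
  ((Posz 0),(Posz 0),34);
  ((Posz 0),(Posz 0),35);
  ((Posz 0),(Posz 0),36);
  ((Posz 0),(Posz 0),37);
  ((Posz 0),(Posz 0),4);
  ((Posz 0),(Posz 0),5);
  ((Posz 0),(Posz 0),0);
  ((Posz 0),(Posz 0),1);
  ((Posz 0),(Posz 0),2);
  ((Posz 0),(Posz 0),3);
  ((Posz 0),(Posz 0),10);
  ((Posz 0),(Posz 0),11);
  ((Posz 0),(Posz 0),12);
  ((Posz 0),(Posz 0),13);
  ((Posz 0),(Posz 0),6);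
  ((Posz 0),(Posz 0),7);
  ((Posz 0),(Posz 0),8);
  ((Posz 0),(Posz 0),9);
  ((Posz 0),(Posz 0),18);
  ((Posz 0),(Posz 0),19);
  ((Posz 0),(Posz 0),14);
  ((Posz 0),(Posz 0),15);
  ((Posz 0),(Posz 0),16);
  ((Posz 0),(Posz 0),17);
  ((Posz 0),(Posz 0),24);
  ((Posz 0),(Posz 0),25);
  ((Posz 0),(Posz 0),20);
  ((Posz 0),(Posz 0),21);
  ((Posz 0),(Posz 0),22);
  ((Posz 0),(Posz 0),23)].
Definition A96 : int*int*int*int := ((Negz 0),(Negz 0),(Posz 1),(Posz 0)).
Definition C96 : seq (int*int*nat) := [::
  ((Posz 0),(Posz 0),96);
  ((Posz 0),(Posz 0),97);
  ((Posz 0),(Posz 0),98);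
  ((Posz 0),(Posz 0),99);
  ((Posz 0),(Posz 0),94);
  ((Posz 0),(Posz 0),95);
  ((Posz 0),(Posz 0),104);
  ((Posz 0),(Posz 0),105);
  ((Posz 0),(Posz 0),106);
  ((Posz 0),(Posz 0),107);
  ((Posz 0),(Posz 0),100);
  ((Posz 0),(Posz 0),101);
  ((Posz 0),(Posz 0),102);
  ((Posz 0),(Posz 0),103);
  ((Posz 0),(Posz 0),110);
  ((Posz 0),(Posz 0),111);
  ((Posz 0),(Posz 0),112);
  ((Posz 0),(Posz 0),113);
  ((Posz 0),(Posz 0),108);
  ((Posz 0),(Posz 0),109);
  ((Posz 0),(Posz 0),116);
  ((Posz 0),(Posz 0),117);
  ((Posz 0),(Posz 0),118);
  ((Posz 0),(Posz 0),119);
  ((Posz 0),(Posz 0),114);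
  ((Posz 0),(Posz 0),115);
  ((Posz 0),(Posz 0),82);
  ((Posz 0),(Posz 0),83);
  ((Posz 0),(Posz 0),84);
  ((Posz 0),(Posz 0),85);
  ((Posz 0),(Posz 0),86);
  ((Posz 0),(Posz 0),87);
  ((Posz 0),(Posz 0),80);
  ((Posz 0),(Posz 0),81);
  ((Posz 0),(Posz 0),90);
  ((Posz 0),(Posz 0),91);
  ((Posz 0),(Posz 0),92);
  ((Posz 0),(Posz 0),93);
  ((Posz 0),(Posz 0),88);
  ((Posz 0),(Posz 0),89);
  ((Posz 0),(Posz 0),16);
  ((Posz 0),(Posz 0),17);
  ((Posz 0),(Posz 0),18);
  ((Posz 0),(Posz 0),19);
  ((Posz 0),(Posz 0),14);
  ((Posz 0),(Posz 0),15);
  ((Posz 0),(Posz 0),22);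
  ((Posz 0),(Posz 0),23);
  ((Posz 0),(Posz 0),24);
  ((Posz 0),(Posz 0),25);
  ((Posz 0),(Posz 0),20);
  ((Posz 0),(Posz 0),21);
  ((Posz 0),(Posz 0),30);
  ((Posz 0),(Posz 0),31);
  ((Posz 0),(Posz 0),32);
  ((Posz 0),(Posz 0),33);
  ((Posz 0),(Posz 0),26);
  ((Posz 0),(Posz 0),27);
  ((Posz 0),(Posz 0),28);
  ((Posz 0),(Posz 0),29);
  ((Posz 0),(Posz 0),36);
  ((Posz 0),(Posz 0),37);
  ((Posz 0),(Posz 0),38);
  ((Posz 0),(Posz 0),39);
  ((Posz 0),(Posz 0),34);
  ((Posz 0),(Posz 0),35);
  ((Posz 0),(Posz 0),2);
  ((Posz 0),(Posz 0),3);
  ((Posz 0),(Posz 0),4);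
  ((Posz 0),(Posz 0),5);
  ((Posz 0),(Posz 0),0);
  ((Posz 0),(Posz 0),1);
  ((Posz 0),(Posz 0),8);
  ((Posz 0),(Posz 0),9);
  ((Posz 0),(Posz 0),10);
  ((Posz 0),(Posz 0),11);
  ((Posz 0),(Posz 0),12);
  ((Posz 0),(Posz 0),13);
  ((Posz 0),(Posz 0),6);
  ((Posz 0),(Posz 0),7);
  ((Posz 0),(Posz 0),54);
  ((Posz 0),(Posz 0),55);
  ((Posz 0),(Posz 0),56);
  ((Posz 0),(Posz 0),57);
  ((Posz 0),(Posz 0),58);
  ((Posz 0),(Posz 0),59);
  ((Posz 0),(Posz 0),52);
  ((Posz 0),(Posz 0),53);
  ((Posz 0),(Posz 0),62);
  ((Posz 0),(Posz 0),63);
  ((Posz 0),(Posz 0),64);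
  ((Posz 0),(Posz 0),65);
  ((Posz 0),(Posz 0),60);
  ((Posz 0),(Posz 0),61);
  ((Posz 0),(Posz 0),68);
  ((Posz 0),(Posz 0),69);
  ((Posz 0),(Posz 0),70);
  ((Posz 0),(Posz 0),71);
  ((Posz 0),(Posz 0),66);
  ((Posz 0),(Posz 0),67);
  ((Posz 0),(Posz 0),74);
  ((Posz 0),(Posz 0),75);
  ((Posz 0),(Posz 0),76);
  ((Posz 0),(Posz 0),77);
  ((Posz 0),(Posz 0),78);
  ((Posz 0),(Posz 0),79);
  ((Posz 0),(Posz 0),72);
  ((Posz 0),(Posz 0),73);
  ((Posz 0),(Posz 0),42);
  ((Posz 0),(Posz 0),43);
  ((Posz 0),(Posz 0),44);
  ((Posz 0),(Posz 0),45);
  ((Posz 0),(Posz 0),40);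
  ((Posz 0),(Posz 0),41);
  ((Posz 0),(Posz 0),48);
  ((Posz 0),(Posz 0),49);
  ((Posz 0),(Posz 0),50);
  ((Posz 0),(Posz 0),51);
  ((Posz 0),(Posz 0),46);
  ((Posz 0),(Posz 0),47)].
Definition A118 : int*int*int*int := ((Posz 1),(Posz 1),(Negz 0),(Posz 0)).
Definition C118 : seq (int*int*nat) := [::
  ((Posz 0),(Posz 0),118);
  ((Posz 0),(Posz 0),119);
  ((Posz 0),(Posz 0),114);
  ((Posz 0),(Posz 0),115);
  ((Posz 0),(Posz 0),116);
  ((Posz 0),(Posz 0),117);
  ((Posz 0),(Posz 0),80);
  ((Posz 0),(Posz 0),81);
  ((Posz 0),(Posz 0),82);
  ((Posz 0),(Posz 0),83);
  ((Posz 0),(Posz 0),84);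
  ((Posz 0),(Posz 0),85);
  ((Posz 0),(Posz 0),86);
  ((Posz 0),(Posz 0),87);
  ((Posz 0),(Posz 0),92);
  ((Posz 0),(Posz 0),93);
  ((Posz 0),(Posz 0),88);
  ((Posz 0),(Posz 0),89);
  ((Posz 0),(Posz 0),90);
  ((Posz 0),(Posz 0),91);
  ((Posz 0),(Posz 0),94);
  ((Posz 0),(Posz 0),95);
  ((Posz 0),(Posz 0),96);
  ((Posz 0),(Posz 0),97);
  ((Posz 0),(Posz 0),98);
  ((Posz 0),(Posz 0),99);
  ((Posz 0),(Posz 0),106);
  ((Posz 0),(Posz 0),107);
  ((Posz 0),(Posz 0),100);
  ((Posz 0),(Posz 0),101);
  ((Posz 0),(Posz 0),102);
  ((Posz 0),(Posz 0),103);
  ((Posz 0),(Posz 0),104);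
  ((Posz 0),(Posz 0),105);
  ((Posz 0),(Posz 0),108);
  ((Posz 0),(Posz 0),109);
  ((Posz 0),(Posz 0),110);
  ((Posz 0),(Posz 0),111);
  ((Posz 0),(Posz 0),112);
  ((Posz 0),(Posz 0),113);
  ((Posz 0),(Posz 1),38);
  ((Posz 0),(Posz 1),39);
  ((Posz 0),(Posz 1),34);
  ((Posz 0),(Posz 1),35);
  ((Posz 0),(Posz 1),36);
  ((Posz 0),(Posz 1),37);
  ((Posz 0),(Posz 1),0);
  ((Posz 0),(Posz 1),1);
  ((Posz 0),(Posz 1),2);
  ((Posz 0),(Posz 1),3);
  ((Posz 0),(Posz 1),4);
  ((Posz 0),(Posz 1),5);
  ((Posz 0),(Posz 1),12);
  ((Posz 0),(Posz 1),13);
  ((Posz 0),(Posz 1),6);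
  ((Posz 0),(Posz 1),7);
  ((Posz 0),(Posz 1),8);
  ((Posz 0),(Posz 1),9);
  ((Posz 0),(Posz 1),10);
  ((Posz 0),(Posz 1),11);
  ((Posz 0),(Posz 1),14);
  ((Posz 0),(Posz 1),15);
  ((Posz 0),(Posz 1),16);
  ((Posz 0),(Posz 1),17);
  ((Posz 0),(Posz 1),18);
  ((Posz 0),(Posz 1),19);
  ((Posz 0),(Posz 1),24);
  ((Posz 0),(Posz 1),25);
  ((Posz 0),(Posz 1),20);
  ((Posz 0),(Posz 1),21);
  ((Posz 0),(Posz 1),22);
  ((Posz 0),(Posz 1),23);
  ((Posz 0),(Posz 1),26);
  ((Posz 0),(Posz 1),27);
  ((Posz 0),(Posz 1),28);
  ((Posz 0),(Posz 1),29);
  ((Posz 0),(Posz 1),30);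
  ((Posz 0),(Posz 1),31);
  ((Posz 0),(Posz 1),32);
  ((Posz 0),(Posz 1),33);
  ((Posz 1),(Posz 0),78);
  ((Posz 1),(Posz 0),79);
  ((Posz 1),(Posz 0),72);
  ((Posz 1),(Posz 0),73);
  ((Posz 1),(Posz 0),74);
  ((Posz 1),(Posz 0),75);
  ((Posz 1),(Posz 0),76);
  ((Posz 1),(Posz 0),77);
  ((Posz 1),(Posz 0),40);
  ((Posz 1),(Posz 0),41);
  ((Posz 1),(Posz 0),42);
  ((Posz 1),(Posz 0),43);
  ((Posz 1),(Posz 0),44);
  ((Posz 1),(Posz 0),45);
  ((Posz 1),(Posz 0),50);
  ((Posz 1),(Posz 0),51);
  ((Posz 1),(Posz 0),46);
  ((Posz 1),(Posz 0),47);
  ((Posz 1),(Posz 0),48);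
  ((Posz 1),(Posz 0),49);
  ((Posz 1),(Posz 0),58);
  ((Posz 1),(Posz 0),59);
  ((Posz 1),(Posz 0),52);
  ((Posz 1),(Posz 0),53);
  ((Posz 1),(Posz 0),54);
  ((Posz 1),(Posz 0),55);
  ((Posz 1),(Posz 0),56);
  ((Posz 1),(Posz 0),57);
  ((Posz 1),(Posz 0),64);
  ((Posz 1),(Posz 0),65);
  ((Posz 1),(Posz 0),60);
  ((Posz 1),(Posz 0),61);
  ((Posz 1),(Posz 0),62);
  ((Posz 1),(Posz 0),63);
  ((Posz 1),(Posz 0),66);
  ((Posz 1),(Posz 0),67);
  ((Posz 1),(Posz 0),68);
  ((Posz 1),(Posz 0),69);
  ((Posz 1),(Posz 0),70);
  ((Posz 1),(Posz 0),71)].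
Definition repl : seq nat := [:: 0; 6; 14; 40; 46; 52; 80; 88; 94].
Definition RD : seq (nat * bool * seq nat) := [::
  (0,false,[::]);
  (0,false,[::1]);
  (0,false,[::2;1]);
  (0,false,[::2]);
  (0,false,[::1;2]);
  (0,false,[::1;2;1]);
  (6,false,[::]);
  (6,false,[::1]);
  (6,false,[::2;1]);
  (6,false,[::2]);
  (6,false,[::1;2;1;2]);
  (6,false,[::2;1;2]);
  (6,false,[::1;2]);
  (6,false,[::1;2;1]);
  (14,false,[::]);
  (14,false,[::1]);
  (14,false,[::2;1]);
  (14,false,[::2]);
  (14,false,[::1;2]);
  (14,false,[::1;2;1]);
  (0,true,[::1;2]);
  (0,true,[::1;2;1]);
  (0,true,[::]);
  (0,true,[::1]);
  (0,true,[::2;1]);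
  (0,true,[::2]);
  (6,true,[::2;1]);
  (6,true,[::2]);
  (6,true,[::1;2;1;2]);
  (6,true,[::2;1;2]);
  (6,true,[::1;2]);
  (6,true,[::1;2;1]);
  (6,true,[::]);
  (6,true,[::1]);
  (14,true,[::1;2]);
  (14,true,[::1;2;1]);
  (14,true,[::]);
  (14,true,[::1]);
  (14,true,[::2;1]);
  (14,true,[::2]);
  (40,false,[::]);
  (40,false,[::1]);
  (40,false,[::2;1]);
  (40,false,[::2]);
  (40,false,[::1;2]);
  (40,false,[::1;2;1]);
  (46,false,[::]);
  (46,false,[::1]);
  (46,false,[::2;1]);
  (46,false,[::2]);
  (46,false,[::1;2]);
  (46,false,[::1;2;1]);
  (52,false,[::]);
  (52,false,[::1]);
  (52,false,[::2;1]);
  (52,false,[::2]);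
  (52,false,[::1;2;1;2]);
  (52,false,[::2;1;2]);
  (52,false,[::1;2]);
  (52,false,[::1;2;1]);
  (40,true,[::1;2]);
  (40,true,[::1;2;1]);
  (40,true,[::]);
  (40,true,[::1]);
  (40,true,[::2;1]);
  (40,true,[::2]);
  (46,true,[::2;1]);
  (46,true,[::2]);
  (46,true,[::1;2]);
  (46,true,[::1;2;1]);
  (46,true,[::]);
  (46,true,[::1]);
  (52,true,[::1;2;1;2]);
  (52,true,[::2;1;2]);
  (52,true,[::1;2]);
  (52,true,[::1;2;1]);
  (52,true,[::]);
  (52,true,[::1]);
  (52,true,[::2;1]);
  (52,true,[::2]);
  (80,false,[::]);
  (80,false,[::1]);
  (80,false,[::2;1]);
  (80,false,[::2]);
  (80,false,[::1;2;1;2]);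
  (80,false,[::2;1;2]);
  (80,false,[::1;2]);
  (80,false,[::1;2;1]);
  (88,false,[::]);
  (88,false,[::1]);
  (88,false,[::2;1]);
  (88,false,[::2]);
  (88,false,[::1;2]);
  (88,false,[::1;2;1]);
  (94,false,[::]);
  (94,false,[::1]);
  (94,false,[::2;1]);
  (94,false,[::2]);
  (94,false,[::1;2]);
  (94,false,[::1;2;1]);
  (80,true,[::1;2;1;2]);
  (80,true,[::2;1;2]);
  (80,true,[::1;2]);
  (80,true,[::1;2;1]);
  (80,true,[::]);
  (80,true,[::1]);
  (80,true,[::2;1]);
  (80,true,[::2]);
  (88,true,[::2;1]);
  (88,true,[::2]);
  (88,true,[::1;2]);
  (88,true,[::1;2;1]);
  (88,true,[::]);
  (88,true,[::1]);
  (94,true,[::1;2]);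
  (94,true,[::1;2;1]);
  (94,true,[::]);
  (94,true,[::1]);
  (94,true,[::2;1]);
  (94,true,[::2])].
Definition col (k : 'I_120) : bool := odd (size (nth [::] Wk k)).
Definition closedbN (w : seq nat) (k : nat) : bool := wappN w (0, 0, k) == (0, 0, k).
Definition GcheckN A ct := [&& size ct == 120%N, all (fun p : int*int*nat => p.2 < 120)%N ct &
  all (fun k => all (fun i => GmapN A ct 0 0 (rhoN i (0,0,k)) == rhoN i (GmapN A ct 0 0 (0,0,k))) [:: 0;1;2]%N) (iota 0 120)].
Definition rotl : seq nat := [:: 0; 22; 46; 70; 96; 118]%N.

Lemma tabs_ok : [&& size K_r0_tab == 120%N, size K_r1_tab == 120%N, size K_r2_tab == 120%N,
  all (fun p : nat*nat*nat => p.2 < 120)%N K_r0_tab, all (fun j => j < 120)%N K_r1_tab &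
  all (fun j => j < 120)%N K_r2_tab].
Proof. vm_compute. reflexivity. Qed.

Lemma conn_ok : all (fun k => wappN (nth [::] Wk k) (0,0,0%N) == (0,0,k)) (iota 0 120) &&
  [&& wappN Wxp (0,0,0%N) == (1,0,0%N), wappN Wxm (0,0,0%N) == (-1,0,0%N),
      wappN Wyp (0,0,0%N) == (0,1,0%N), wappN Wym (0,0,0%N) == (0,-1,0%N) &
   ~~ odd (size Wxp) && ~~ odd (size Wxm) && ~~ odd (size Wyp) && ~~ odd (size Wym)].
Proof. vm_compute. reflexivity. Qed.

Lemma dist_ok : all (fun k => [|| odd (size (nth [::] Wk k)), (k \in rotl) |
   ~~ all (fun w => closedbN w k == closedbN w 0) dws]) (iota 0 120).
Proof. vm_compute. reflexivity. Qed.

Lemma G22 : GcheckN A22 C22. Proof. vm_compute. reflexivity. Qed.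
Lemma G46 : GcheckN A46 C46. Proof. vm_compute. reflexivity. Qed.
Lemma G70 : GcheckN A70 C70. Proof. vm_compute. reflexivity. Qed.
Lemma G96 : GcheckN A96 C96. Proof. vm_compute. reflexivity. Qed.
Lemma G118 : GcheckN A118 C118. Proof. vm_compute. reflexivity. Qed.
Lemma nth_lt (T : Type) (x0 : T) (s : seq T) (P : pred T) i :
  all P s -> (i < size s)%N -> P (nth x0 s i).
Proof. by move=> /all_nthP H /H. Qed.

Lemma piK_rho i x : piK (rho i x) = rhoN i (piK x).
Proof.
case: x => [[s t] k].
have /and5P [s0 s1 s2 a0 /andP [a1 a2]] := tabs_ok.
case: i => [|[|i]] /=.
- have := nth_lt (1,1,0)%N a0 (_ : (k < size K_r0_tab)%N).
  rewrite (eqP s0) => /(_ (ltn_ord k)).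
  by case: (nth _ _ _) => [[o1 o2] j] /= hj; rewrite inordK.
- have := nth_lt 0%N a1 (_ : (k < size K_r1_tab)%N).
  rewrite (eqP s1) => /(_ (ltn_ord k)) hj; by rewrite inordK.
- have := nth_lt 0%N a2 (_ : (k < size K_r2_tab)%N).
  rewrite (eqP s2) => /(_ (ltn_ord k)) hj; by rewrite inordK.
Qed.

Lemma piK_inj : injective piK.
Proof.
move=> [[s t] k] [[s' t'] k'] /= [-> -> e]; congr (_, _, _); exact: val_inj.
Qed.

Lemma piK_wapp w x : piK (wapp w x) = wappN w (piK x).
Proof. by elim: w x => //= a w IH x; rewrite IH piK_rho. Qed.

Lemma piK_tr a b x : piK (tr a b x) = trN a b (piK x).
Proof. by case: x => [[s t] k]. Qed.

Lemma piK_inord (u v : int) (k : nat) : (k < 120)%N -> piK (u, v, inord k) = (u, v, k).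
Proof. by move=> hk /=; rewrite inordK. Qed.

Lemma rhoN_tr i a b x : rhoN i (trN a b x) = trN a b (rhoN i x).
Proof.
case: x => [[s t] k]; case: i => [|[|i]] //=.
case: (nth _ _ _) => [[o1 o2] j] /=; congr (_, _, _); lia.
Qed.

Lemma rho_tr i a b x : rho i (tr a b x) = tr a b (rho i x).
Proof. apply: piK_inj; by rewrite piK_rho !piK_tr piK_rho rhoN_tr. Qed.

Lemma wapp_tr w a b x : wapp w (tr a b x) = tr a b (wapp w x).
Proof. by elim: w x => //= c w IH x; rewrite rho_tr IH. Qed.

Lemma wappN_tr w a b x : wappN w (trN a b x) = trN a b (wappN w x).
Proof. by elim: w x => //= c w IH x; rewrite rhoN_tr IH. Qed.

Lemma wapp_cat w1 w2 x : wapp (w1 ++ w2) x = wapp w2 (wapp w1 x).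
Proof. by elim: w1 x => //= c w IH x. Qed.

Lemma xtr (s t : int) (k : 'I_120) : (s, t, k) = tr s t (0, 0, k).
Proof. by rewrite /tr !add0r. Qed.

Lemma xtrN (s t : int) (k : nat) : (s, t, k) = trN s t (0, 0, k).
Proof. by rewrite /trN !add0r. Qed.

Lemma wappN_loc w (s t : int) k : wappN w (s, t, k) = trN s t (wappN w (0, 0, k)).
Proof. by rewrite {1}xtrN wappN_tr. Qed.

Lemma tr_tr a b c d x : tr a b (tr c d x) = tr (c + a) (d + b) x.
Proof. case: x => [[s t] k] /=; congr (_, _, _); lia. Qed.

Lemma tr_comm a b c d x : tr a b (tr c d x) = tr c d (tr a b x).
Proof. rewrite !tr_tr; congr tr; lia. Qed.

Lemma tr0 x : tr 0 0 x = x.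
Proof. case: x => [[s t] k] /=; by rewrite !addr0. Qed.

Lemma Wk_ok (k : 'I_120) : wapp (nth [::] Wk k) x0 = (0, 0, k).
Proof.
apply: piK_inj; rewrite piK_wapp /=.
have /andP [/allP H _] := conn_ok.
by apply/eqP; apply: H; rewrite mem_iota /=.
Qed.

Lemma Wtr_ok : [/\ wapp Wxp x0 = (1, 0, o0), wapp Wxm x0 = (-1, 0, o0),
   wapp Wyp x0 = (0, 1, o0) & wapp Wym x0 = (0, -1, o0)].
Proof.
have /andP [_ /and5P [h1 h2 h3 h4 _]] := conn_ok.
by split; apply: piK_inj; rewrite piK_wapp; apply/eqP.
Qed.

Lemma Wtr_even : [&& ~~ odd (size Wxp), ~~ odd (size Wxm), ~~ odd (size Wyp) & ~~ odd (size Wym)].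
Proof. by move: conn_ok => /andP [_ /and5P [_ _ _ _]]; rewrite -!andbA. Qed.

Lemma int_ind2 (P : int -> Prop) : P 0 -> (forall z, P z -> P (z + 1)) ->
  (forall z, P z -> P (z - 1)) -> forall z, P z.
Proof.
move=> h0 hp hm [] n.
- elim: n => // n IH; have -> : Posz n.+1 = Posz n + 1 by lia. exact: hp.
- elim: n => [|n IH]; first by have := hm _ h0; rewrite sub0r.
  have -> : Negz n.+1 = Negz n - 1 by lia. exact: hm.
Qed.

Lemma reach0 s t : exists w, wapp w x0 = (s, t, o0) /\ ~~ odd (size w).
Proof.
have [e1 e2 e3 e4] := Wtr_ok.
have /and4P [v1 v2 v3 v4] := Wtr_even.
have step : forall (a b : int) w w', wapp w x0 = (a, b, o0) -> ~~ odd (size w) ->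
   ~~ odd (size w') -> wapp (w ++ w') x0 = tr a b (wapp w' x0) /\ ~~ odd (size (w ++ w')).
  move=> a b w w' h hw hw'; rewrite wapp_cat h xtr wapp_tr; split => //.
  by rewrite size_cat oddD (negbTE hw) (negbTE hw').
elim/int_ind2: t.
- elim/int_ind2: s; first by exists [::]; split.
  + move=> z [w [h hw]]; have [h1 h2] := step _ _ _ _ h hw v1.
    exists (w ++ Wxp); split => //; rewrite h1 e1 /=; congr (_, _, _); lia.
  + move=> z [w [h hw]]; have [h1 h2] := step _ _ _ _ h hw v2.
    exists (w ++ Wxm); split => //; rewrite h1 e2 /=; congr (_, _, _); lia.
- move=> z [w [h hw]]; have [h1 h2] := step _ _ _ _ h hw v3.
  exists (w ++ Wyp); split => //; rewrite h1 e3 /=; congr (_, _, _); lia.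
- move=> z [w [h hw]]; have [h1 h2] := step _ _ _ _ h hw v4.
  exists (w ++ Wym); split => //; rewrite h1 e4 /=; congr (_, _, _); lia.
Qed.

Lemma reach_all (x : KF) : exists w, wapp w x0 = x /\ odd (size w) = col x.2.
Proof.
case: x => [[s t] k] /=.
have [w [h hw]] := reach0 s t.
exists (w ++ nth [::] Wk k); rewrite wapp_cat h xtr wapp_tr Wk_ok -xtr; split => //.
by rewrite size_cat oddD (negbTE hw).
Qed.

Definition commK (f : KF -> KF) := forall i x, f (rho i x) = rho i (f x).

Lemma aut_commK g : is_aut K g -> commK g.
Proof. by move=> [_ H] [|[|i]] x /=; case: (H x). Qed.

Lemma wapp_comm f w x : commK f -> f (wapp w x) = wapp w (f x).
Proof. by move=> hf; elim: w x => //= a w IH x; rewrite IH hf. Qed.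

Lemma uniq_comm f h : commK f -> commK h -> f x0 = h x0 -> forall x, f x = h x.
Proof.
move=> hf hh e x; have [w [<- _]] := reach_all x.
by rewrite !wapp_comm // e.
Qed.

Lemma tr_commK a b : commK (tr a b).
Proof. by move=> i x; rewrite rho_tr. Qed.

Lemma piK_Gmap A C s t x : GcheckN A C -> piK (Gmap A C s t x) = GmapN A C s t (piK x).
Proof.
case/and3P => /eqP hs ha _; case: x => [[u v] k] /=.
case: A => [[[a11 a12] a21] a22].
have := nth_lt (0, 0, 0%N) ha (_ : (k < size C)%N); rewrite hs => /(_ (ltn_ord k)).
by case: (nth _ _ _) => [[c1 c2] j] /= hj; rewrite inordK.
Qed.

Lemma GmapN_tr A C s t a b : exists a' b',
  forall y, GmapN A C s t (trN a b y) = trN a' b' (GmapN A C s t y).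
Proof.
case: A => [[[a11 a12] a21] a22].
exists (a11 * a + a12 * b), (a21 * a + a22 * b) => [[[u v] k]] /=.
case: (nth _ _ _) => [[c1 c2] j] /=; congr (_, _, _); ring.
Qed.

Lemma Gmap_comm A C s t : GcheckN A C -> commK (Gmap A C s t).
Proof.
move=> hG i x; apply: piK_inj; rewrite piK_Gmap // !piK_rho piK_Gmap //.
case: x => [[u v] k]; rewrite [piK _]/= (xtrN u v k).
have [a' [b' Ha]] := GmapN_tr A C s t u v.
have [a'' [b'' Hb]] := GmapN_tr A C 0 0 s t.
have e0 : forall y, GmapN A C s t y = trN s t (GmapN A C 0 0 y).
  move=> [[p q] m]; case: A {Ha Hb hG} => [[[a11 a12] a21] a22] /=.
  case: (nth _ _ _) => [[c1 c2] j] /=; congr (_, _, _); lia.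
rewrite rhoN_tr !Ha !e0 rhoN_tr; congr trN; rewrite rhoN_tr; congr trN.
have /and3P [_ _ /allP H] := hG.
have := H k; rewrite mem_iota /= ltn_ord => /(_ isT) /and3P [h0 h1 /andP [h2 _]].
by case: i => [|[|i]]; apply/eqP.
Qed.
Lemma reach2_trans (F : Type) (f g : F -> F) x y z :
  reach2 f g x y -> reach2 f g y z -> reach2 f g x z.
Proof.
move=> hxy; elim=> [//|z' _ IH|z' _ IH]; [exact: reach2_f | exact: reach2_g].
Qed.

Lemma face_word y w : all (fun i => i < 2)%N w -> same_face K y (wapp w y).
Proof.
elim: w y => [|a w IH] y /=; first by move=> _; exact: reach2_refl.
case/andP=> ha hw; apply: reach2_trans (IH _ hw).
case: a ha => [|[|//]] _ /=.
- exact: (reach2_f (reach2_refl _ _ _)).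
- exact: (reach2_g (reach2_refl _ _ _)).
Qed.

Lemma rot_helper A C s t (u v : int) (K0 j : nat) w (a11 a12 a21 a22 c1 c2 o1 o2 : int) :
  GcheckN A C -> (K0 < 120)%N -> A = (a11, a12, a21, a22) -> nth (0, 0, 0%N) C K0 = (c1, c2, j) ->
  all (fun i => i < 2)%N w -> wappN w (0, 0, j) = (o1, o2, K0) ->
  a11 * u + a12 * v + c1 + s + o1 = u -> a21 * u + a22 * v + c2 + t + o2 = v ->
  same_face K (Gmap A C s t (u, v, inord K0)) (u, v, inord K0).
Proof.
move=> hG hK hA hC hw hW e1 e2.
set x := (u, v, inord K0); set y := Gmap A C s t x.
have E : x = wapp w y.
  rewrite /y /x; apply: piK_inj; rewrite piK_wapp piK_Gmap // piK_inord // /GmapN hA hC wappN_loc hW /trN /=.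
  by rewrite [o1 + _]addrC [o2 + _]addrC e1 e2.
rewrite {1}E; exact: face_word.
Qed.
Lemma rot22 (s t : int) : exists x, same_face K (Gmap A22 C22 s t x) x.
Proof.
have [h1|h1] : ((s %% 2)%Z = 0 \/ (s %% 2)%Z = 1) by lia.
all: have [h2|h2] : ((t %% 2)%Z = 0 \/ (t %% 2)%Z = 1) by lia.
- exists (((2 * (s - 0) + 0 * (t - 0)) %/ 4)%Z + 0, ((0 * (s - 0) + 2 * (t - 0)) %/ 4)%Z + 0, inord 0).
  apply: (@rot_helper A22 C22 s t _ _ 0 22 [::0;1;0;1;0;1] (-1) 0 0 (-1) 0 0 0 0 G22) => //; try (by vm_compute); lia.
- exists (((2 * (s - 0) + 0 * (t - 1)) %/ 4)%Z + 0, ((0 * (s - 0) + 2 * (t - 1)) %/ 4)%Z + 0, inord 80).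
  apply: (@rot_helper A22 C22 s t _ _ 80 104 [::0;1;0;1;0;1] (-1) 0 0 (-1) 0 (-1) 0 0 G22) => //; try (by vm_compute); lia.
- exists (((2 * (s - 1) + 0 * (t - 0)) %/ 4)%Z + 0, ((0 * (s - 1) + 2 * (t - 0)) %/ 4)%Z + 0, inord 2).
  apply: (@rot_helper A22 C22 s t _ _ 2 24 [::0;1;0;1;0;1;0;1;0;1;0;1] (-1) 0 0 (-1) 0 0 (-1) 0 G22) => //; try (by vm_compute); lia.
- exists (((2 * (s - 1) + 0 * (t - 1)) %/ 4)%Z + 1, ((0 * (s - 1) + 2 * (t - 1)) %/ 4)%Z + 0, inord 40).
  apply: (@rot_helper A22 C22 s t _ _ 40 62 [::0;1;0;1;0;1] (-1) 0 0 (-1) 1 (-1) 0 0 G22) => //; try (by vm_compute); lia.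
Qed.

Lemma rot46 (s t : int) : exists x, same_face K (Gmap A46 C46 s t x) x.
Proof.
- exists (((0 * (s - 0) + (-1) * (t - 0)) %/ 1)%Z + (-1), ((1 * (s - 0) + 1 * (t - 0)) %/ 1)%Z + 0, inord 2).
  apply: (@rot_helper A46 C46 s t _ _ 2 48 [::0;1;0;1] 0 (-1) 1 1 0 0 (-1) 1 G46) => //; try (by vm_compute); lia.
Qed.

Lemma rot70 (s t : int) : exists x, same_face K (Gmap A70 C70 s t x) x.
Proof.
have [h1|[h1|h1]] : ((s + 2 * t) %% 3)%Z = 0 \/ ((s + 2 * t) %% 3)%Z = 1 \/ ((s + 2 * t) %% 3)%Z = 2 by lia.
- exists (((2 * (s - 0) + 1 * (t - 0)) %/ 3)%Z + 0, (((-1) * (s - 0) + 1 * (t - 0)) %/ 3)%Z + 0, inord 10).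
  apply: (@rot_helper A70 C70 s t _ _ 10 74 [::1;0] 0 1 (-1) (-1) 0 0 0 0 G70) => //; try (by vm_compute); lia.
- exists (((2 * (s - 1) + 1 * (t - 0)) %/ 3)%Z + 0, (((-1) * (s - 1) + 1 * (t - 0)) %/ 3)%Z + 0, inord 2).
  apply: (@rot_helper A70 C70 s t _ _ 2 66 [::1;0;1;0;1;0;1;0] 0 1 (-1) (-1) 0 0 (-1) 0 G70) => //; try (by vm_compute); lia.
- exists (((2 * (s - 2) + 1 * (t - 0)) %/ 3)%Z + 1, (((-1) * (s - 2) + 1 * (t - 0)) %/ 3)%Z + 0, inord 28).
  apply: (@rot_helper A70 C70 s t _ _ 28 58 [::1;0] 0 1 (-1) (-1) 0 0 (-1) 1 G70) => //; try (by vm_compute); lia.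
Qed.

Lemma rot96 (s t : int) : exists x, same_face K (Gmap A96 C96 s t x) x.
Proof.
have [h1|[h1|h1]] : ((s + 2 * t) %% 3)%Z = 0 \/ ((s + 2 * t) %% 3)%Z = 1 \/ ((s + 2 * t) %% 3)%Z = 2 by lia.
- exists (((1 * (s - 0) + (-1) * (t - 0)) %/ 3)%Z + 0, ((1 * (s - 0) + 2 * (t - 0)) %/ 3)%Z + 0, inord 10).
  apply: (@rot_helper A96 C96 s t _ _ 10 100 [::0;1] (-1) (-1) 1 0 0 0 0 0 G96) => //; try (by vm_compute); lia.
- exists (((1 * (s - 1) + (-1) * (t - 0)) %/ 3)%Z + 0, ((1 * (s - 1) + 2 * (t - 0)) %/ 3)%Z + 1, inord 28).
  apply: (@rot_helper A96 C96 s t _ _ 28 84 [::0;1] (-1) (-1) 1 0 0 0 0 1 G96) => //; try (by vm_compute); lia.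
- exists (((1 * (s - 2) + (-1) * (t - 0)) %/ 3)%Z + 0, ((1 * (s - 2) + 2 * (t - 0)) %/ 3)%Z + 1, inord 2).
  apply: (@rot_helper A96 C96 s t _ _ 2 98 [::0;1;0;1;0;1;0;1] (-1) (-1) 1 0 0 0 (-1) 1 G96) => //; try (by vm_compute); lia.
Qed.

Lemma rot118 (s t : int) : exists x, same_face K (Gmap A118 C118 s t x) x.
Proof.
- exists (((1 * (s - 0) + 1 * (t - 0)) %/ 1)%Z + 0, (((-1) * (s - 0) + 0 * (t - 0)) %/ 1)%Z + 0, inord 2).
  apply: (@rot_helper A118 C118 s t _ _ 2 114 [::1;0;1;0] 1 1 (-1) 0 0 0 0 0 G118) => //; try (by vm_compute); lia.
Qed.
Definition rhoX (XF : Type) (X : mapstr XF) (i : nat) : XF -> XF :=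
  match i with 0%N => rho0 X | 1%N => rho1 X | _ => rho2 X end.

Lemma eta_rho XF (X : mapstr XF) Gam eta : is_quotient_map K X Gam eta ->
  forall i x, eta (rho i x) = rhoX X i (eta x).
Proof. by case=> H _ _ [|[|i]] x /=; case: (H x). Qed.

Lemma eta_gam XF (X : mapstr XF) Gam eta g : is_quotient_map K X Gam eta -> Gam g ->
  forall x, eta (g x) = eta x.
Proof. by case=> _ _ H hg x; symmetry; apply/H; exists g. Qed.

Lemma col_wapp XF (X : mapstr XF) Gam eta (c : XF -> bool) : is_quotient_map K X Gam eta ->
  (forall z, [/\ c (rho0 X z) = ~~ c z, c (rho1 X z) = ~~ c z & c (rho2 X z) = ~~ c z]) ->
  forall w x, c (eta (wapp w x)) = odd (size w) (+) c (eta x).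
Proof.
move=> hq hc; elim=> [|a w IH] x /=; first by [].
rewrite IH (eta_rho hq); have [h0 h1 h2] := hc (eta x).
by case: a => [|[|a]] /=; rewrite ?h0 ?h1 ?h2 addbN addNb.
Qed.

Lemma tr_inj a b : injective (tr a b).
Proof.
move=> x y /(congr1 (tr (-a) (-b))); rewrite !tr_tr.
have -> : a + - a = 0 by lia. have -> : b + - b = 0 by lia.
by rewrite !tr0.
Qed.

Lemma Gmap_x0 A C s t (j : nat) : GcheckN A C -> nth (0, 0, 0%N) C 0 = (0, 0, j) ->
  piK (Gmap A C s t x0) = (s, t, j).
Proof.
move=> hG hC; rewrite piK_Gmap //= /GmapN; case: A {hG} => [[[a11 a12] a21] a22].
rewrite hC; congr (_, _, _); lia.
Qed.

Lemma gam_trans (XF : finType) (X : mapstr XF) Gam eta :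
  is_aut_subgroup K Gam -> no_fixed_cells K Gam -> is_quotient_map K X Gam eta -> orientable X ->
  forall g, Gam g -> exists s t, forall x, g x = tr s t x.
Proof.
move=> [_ _ _ hA] hnf hq [c hc] g hg.
have gc := aut_commK (hA g hg).
have ginj : injective g by case: (hA g hg) => /bij_inj.
case E : (g x0) => [[s t] k1].
have hcol : col k1 = false.
  have [w [hw hs]] := reach_all (s, t, k1).
  have := col_wapp hq hc w x0; rewrite hw -E (eta_gam hq hg) hs /=.
  by case: (col k1); case: (c _).
have hcl : forall w, closedbN w k1 = closedbN w 0.
  move=> w; rewrite /closedbN.
  have -> : (wappN w (0, 0, nat_of_ord k1) == (0, 0, nat_of_ord k1)) =
            (wapp w (g x0) == g x0).
    rewrite E xtr wapp_tr (inj_eq (@tr_inj s t)) -(inj_eq piK_inj) piK_wapp //.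
  rewrite -(wapp_comm w x0 gc) (inj_eq ginj) -(inj_eq piK_inj) piK_wapp //.
have hk : (nat_of_ord k1 \in rotl).
  have := allP dist_ok (nat_of_ord k1); rewrite mem_iota add0n ltn_ord => /(_ isT).
  move: hcol; rewrite /col => ->; rewrite orFb; case/orP => // /negP []; apply/allP => w _.
  by rewrite hcl.
have rotc : forall A C, GcheckN A C -> (forall s t, exists x, same_face K (Gmap A C s t x) x) ->
    nat_of_ord k1 != 0%N -> piK (Gmap A C s t x0) = (s, t, nat_of_ord k1) -> False.
  move=> A C hG hR hk0 hx.
  have ne : (exists x, g x <> x).
    exists x0; rewrite E => -[_ _ e']; move: hk0; by rewrite e'.
  have hgE : forall x, g x = Gmap A C s t x.
    apply: uniq_comm => //; first exact: Gmap_comm.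
    by rewrite E; apply: piK_inj; rewrite hx.
  have [x hx'] := hR s t; have [_ _ hf] := hnf g hg ne x; apply: hf; by rewrite hgE.
move: hk; rewrite !inE => /or4P [/eqP e|/eqP e|/eqP e|/orP [/eqP e|/orP [/eqP e|/eqP e]]] //.
- exists s, t; apply: uniq_comm => //; first exact: tr_commK.
  rewrite E; apply: piK_inj; rewrite /= e; congr (_, _, _); lia.
- case: (rotc _ _ G22 rot22); rewrite e //; apply: Gmap_x0 => //; by vm_compute.
- case: (rotc _ _ G46 rot46); rewrite e //; apply: Gmap_x0 => //; by vm_compute.
- case: (rotc _ _ G70 rot70); rewrite e //; apply: Gmap_x0 => //; by vm_compute.
- case: (rotc _ _ G96 rot96); rewrite e //; apply: Gmap_x0 => //; by vm_compute.
- case: (rotc _ _ G118 rot118); rewrite e //; apply: Gmap_x0 => //; by vm_compute.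
Qed.
Definition Hm : KF -> KF := Gmap A22 C22 0 0.

Lemma Hm_comm : commK Hm. Proof. exact: Gmap_comm G22. Qed.

Lemma HH : cancel Hm Hm.
Proof.
move=> x; apply: (@uniq_comm (fun x => Hm (Hm x)) id) => //.
- by move=> i y; rewrite !Hm_comm.
- apply: piK_inj; rewrite /Hm !piK_Gmap //; by vm_compute.
Qed.

Lemma Hm_tr a b x : Hm (tr a b x) = tr (- a) (- b) (Hm x).
Proof.
apply: piK_inj; rewrite /Hm piK_Gmap // !piK_tr piK_Gmap //.
case: x => [[u v] k] /=; rewrite /GmapN /A22 /=.
case: (nth _ _ _) => [[c1 c2] j] /=; congr (_, _, _); lia.
Qed.

Lemma tr_cancel a b c d x : c = - a -> d = - b -> tr c d (tr a b x) = x.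
Proof. move=> -> ->; rewrite tr_tr. have -> : a + - a = 0 by lia. have -> : b + - b = 0 by lia. exact: tr0. Qed.

Definition RDcheck := all (fun k =>
  let: (r, e, wv) := nth (0%N, false, [::]) RD k in
  let y := if e then GmapN A22 C22 0 0 (0, 0, r) else (0, 0, r) in
  [&& r \in repl, (r < 120)%N, all (fun i => 0 < i)%N wv &
      wappN wv y == (y.1.1, y.1.2, k)]) (iota 0 120).

Lemma RD_ok : RDcheck. Proof. vm_compute. reflexivity. Qed.

Lemma vclass_step (XF : finType) (X : mapstr XF) z : involutive (rho1 X) -> involutive (rho2 X) ->
  vclass X (rho1 X z) = vclass X z /\ vclass X (rho2 X z) = vclass X z.
Proof.
move=> i1 i2; split; apply/setP => y; rewrite !inE; apply/idP/idP => h.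
- apply: (connect_trans _ h); apply: connect1; by rewrite /vrel eqxx.
- apply: (connect_trans _ h); apply: connect1; by rewrite /vrel i1 eqxx.
- apply: (connect_trans _ h); apply: connect1; by rewrite /vrel eqxx orbT.
- apply: (connect_trans _ h); apply: connect1; by rewrite /vrel i2 eqxx orbT.
Qed.

Lemma vclass_wapp (XF : finType) (X : mapstr XF) Gam eta w x : is_quotient_map K X Gam eta ->
  involutive (rho1 X) -> involutive (rho2 X) -> all (fun i => 0 < i)%N w ->
  vclass X (eta (wapp w x)) = vclass X (eta x).
Proof.
move=> hq i1 i2; elim: w x => [//|a w IH] x /= /andP [ha hw].
rewrite IH // (eta_rho hq); have [h1 h2] := vclass_step (eta x) i1 i2.
by case: a ha => [|[|a]] _ //=.
Qed.

Lemma autX (XF : finType) (X : mapstr XF) Gam eta (F F' : KF -> KF) :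
  is_quotient_map K X Gam eta -> commK F -> cancel F F' -> cancel F' F ->
  (forall g, Gam g -> exists2 g', Gam g' & forall x, F (g x) = g' (F x)) ->
  (forall g, Gam g -> exists2 g', Gam g' & forall x, F' (g x) = g' (F' x)) ->
  exists a, is_aut X a /\ forall x, a (eta x) = eta (F x).
Proof.
move=> hq hF c1 c2 nF nF'.
have [hr hs he] := hq.
have wd : forall G, (forall g, Gam g -> exists2 g', Gam g' & forall x, G (g x) = g' (G x)) ->
    forall x y, eta x = eta y -> eta (G x) = eta (G y).
  move=> G nG x y /he [g hg <-]; have [g' hg' ->] := nG g hg.
  by rewrite (eta_gam hq hg').
have ex z : exists x : KF, eta x == z by have [x <-] := hs z; exists x.
pose p z := xchoose (ex z).
have pP z : eta (p z) = z := eqP (xchooseP (ex z)).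
pose a z := eta (F (p z)).
pose b z := eta (F' (p z)).
have aE x : a (eta x) = eta (F x) by apply: wd nF _ _ (pP (eta x)).
have bE x : b (eta x) = eta (F' x) by apply: wd nF' _ _ (pP (eta x)).
exists a; split => //; split.
- exists b => z; have [x <-] := hs z; by rewrite ?aE ?bE ?c1 ?c2 ?aE ?bE.
- move=> z; have [x <-] := hs z; have [e0 e1 e2] := hr x.
  have [f0 f1 f2] := hr (F x).
  rewrite -e0 -e1 -e2 !aE -f0 -f1 -f2.
  have g0 := hF 0%N x; have g1 := hF 1%N x; have g2 := hF 2%N x; simpl in g0, g1, g2.
  by rewrite /= g0 g1 g2.
Qed.
Local Close Scope ring_scope.
Theorem theorem1 (XF : finType) (X : mapstr XF)
    (Gam : (KF -> KF) -> Prop) (eta : KF -> XF) :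
  is_aut_subgroup K Gam ->
  no_fixed_cells K Gam ->
  is_quotient_map K X Gam eta ->
  is_torus_map X ->
  polyhedral X ->
  exists reps : seq XF,
    size reps <= 9 /\
    forall x : XF, exists a : XF -> XF,
      is_aut X a /\ exists2 y, y \in reps & vclass X (a y) = vclass X x.
Proof.
move=> hsub hnf hq [[[_ i1 i2] _ _ _] hor _] _.
have [hid hcomp hinvg hA] := hsub.
have ht := gam_trans hsub hnf hq hor.
have [hr hs he] := hq.
have neg : forall g a b, Gam g -> (forall x, g x = tr a b x) ->
    exists2 h, Gam h & forall x, h x = tr (- a)%R (- b)%R x.
  move=> g a b hg hgE; have [h hh [ch _]] := hinvg g hg; exists h => //.
  have [c [d hd]] := ht h hh.
  have := ch x0; rewrite hgE hd tr_tr => /(congr1 piK) /= [e1 e2] x.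
  rewrite hd; congr tr; lia.
have nT : forall p q g, Gam g -> exists2 g', Gam g' & forall x, tr p q (g x) = g' (tr p q x).
  move=> p q g hg; exists g => // x; have [a [b hgE]] := ht g hg.
  by rewrite !hgE tr_comm.
have nTH : forall p q g, Gam g ->
    exists2 g', Gam g' & forall x, tr p q (Hm (g x)) = g' (tr p q (Hm x)).
  move=> p q g hg; have [a [b hgE]] := ht g hg; have [h hh hE] := neg g a b hg hgE.
  exists h => // x; by rewrite hgE Hm_tr hE tr_comm.
have nHT : forall p q g, Gam g ->
    exists2 g', Gam g' & forall x, Hm (tr p q (g x)) = g' (Hm (tr p q x)).
  move=> p q g hg; have [a [b hgE]] := ht g hg; have [h hh hE] := neg g a b hg hgE.
  exists h => // x; by rewrite hgE tr_comm Hm_tr hE.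
exists (map (fun r => eta ((0%R, 0%R, inord r) : KF)) repl); split; first by rewrite size_map.
move=> z; have [[[u v] k] <-] := hs z.
have hk : (k < 120)%N := ltn_ord k.
have := allP RD_ok (nat_of_ord k); rewrite mem_iota add0n hk => /(_ isT).
case E : (nth _ RD _) => [[r e] wv].
case/and4P => hrep hr120 hwv hW.
have py0 : piK (if e then Hm ((0%R, 0%R, inord r) : KF) else ((0%R, 0%R, inord r) : KF)) =
   (if e then GmapN A22 C22 0%R 0%R (0%R, 0%R, r) else (0%R, 0%R, r)).
  by case: (e); [rewrite /Hm piK_Gmap // piK_inord | rewrite /= inordK].
case Ey : (if e then Hm _ else _) => [[c1 c2] kt].
rewrite Ey /= in py0; rewrite -py0 /= in hW.
pose F := fun x => tr (u - c1)%R (v - c2)%R (if e then Hm x else x).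
pose F' := fun x => if e then Hm (tr (c1 - u)%R (c2 - v)%R x) else tr (c1 - u)%R (c2 - v)%R x.
have [a [ha aE]] : exists a, is_aut X a /\ forall x, a (eta x) = eta (F x).
  apply: (autX hq (F' := F')).
  - move=> i x; rewrite /F; case: (e) => /=; last by rewrite rho_tr.
    by rewrite Hm_comm rho_tr.
  - move=> x; rewrite /F /F'; case: (e) => /=.
    + by rewrite tr_cancel ?HH //; lia.
    + by rewrite tr_cancel //; lia.
  - move=> x; rewrite /F /F'; case: (e) => /=.
    + by rewrite HH tr_cancel //; lia.
    + by rewrite tr_cancel //; lia.
  - rewrite /F; case: (e) => /= g hg; [exact: nTH | exact: nT].
  - rewrite /F'; case: (e) => /= g hg; [exact: nHT | exact: nT].
exists a; split => //.
exists (eta ((0%R, 0%R, inord r) : KF)); first by apply: (map_f (fun r => eta ((0%R, 0%R, inord r) : KF))).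
rewrite aE.
have hF0 : F ((0%R, 0%R, inord r) : KF) = tr (u - c1)%R (v - c2)%R (c1, c2, kt) by rewrite /F -Ey.
rewrite hF0 -(vclass_wapp (w := wv) _ hq) //.
congr (vclass X (eta _)); apply: piK_inj.
rewrite piK_wapp piK_tr wappN_tr /= (eqP hW) /=; congr (_, _, _); lia.
Qed.
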